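(* Let $\sigma$ be the substitution $a\mapsto abab$, $b\mapsto b$ with fixed point $\mathbf{z}=\sigma^\omega(a)$, and $Z$ the orbit closure of $\mathbf{z}$. Define $p_1=a$ and $p_{k+1}=p_kb^kp_k$, so $\mathbf{z}=\lim_k p_k$. Then for every $k\ge1$, a word of the form $uab^k$ (with $u\in\{a,b\}^*$) is a right special factor of $\mathcal{L}(Z)$ if and only if it is a suffix of $b^kp_kb^k$.
   Context: $\mathcal{L}(Z)$ is the set of finite factors of $\mathbf{z}$ (equivalently of elements of $Z$). A word $w\in\mathcal{L}(Z)$ is right special if both $wa$ and $wb$ belong to $\mathcal{L}(Z)$. *)

(* Defs.v *)
From mathcomp Require Import all_boot.
Set Implicit Arguments. Unset Strict Implicit. Unset Printing Implicit Defensive.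

Definition letter := bool.
Definition la : letter := false.
Definition lb : letter := true.

Definition sigma_letter (x : letter) : seq letter :=
  if x == la then [:: la; lb; la; lb] else [:: lb].
Definition sigma (w : seq letter) : seq letter := flatten (map sigma_letter w).

(* The fixed point z = sigma^omega(a): the i-th letter of z is the i-th letter
   of sigma^(i+1)(a) (which has length > i, and sigma^n(a) is a prefix of
   sigma^(n+1)(a)). *)
Definition z (i : nat) : letter := nth la (iter i.+1 sigma [:: la]) i.

Definition inL (w : seq letter) : Prop :=
  exists i, w = mkseq (fun j => z (i + j)) (size w).

Definition right_special (w : seq letter) : Prop :=
  inL (rcons w la) /\ inL (rcons w lb).

(* p_1 = a, p_{k+1} = p_k b^k p_k  (p 0 is a dummy equal to p 1). *)
Fixpoint p (k : nat) : seq letter :=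
  match k with
  | 0 | 1 => [:: la]
  | k'.+1 => p k' ++ nseq k' lb ++ p k'
  end.

(* Main.v *)
Require Import Defs.
From mathcomp Require Import all_boot.
From mathcomp Require Import zify.

Set Implicit Arguments. Unset Strict Implicit. Unset Printing Implicit Defensive.

Lemma cat_split (T : Type) (s1 s2 x t : seq T) : s1 ++ s2 = x ++ t ->
  (exists m, x = s1 ++ m /\ s2 = m ++ t) \/ (exists m, s1 = x ++ m /\ t = m ++ s2).
Proof.
elim: s1 x => [|c s1 IH] [|d x] /= H.
- by left; exists [::]; split.
- by left; exists (d :: x); split.
- by right; exists (c :: s1); split.
- case: H => <- /IH [[m [-> ->]]|[m [-> ->]]].
  + by left; exists m.
  + by right; exists m.
Qed.

Lemma cat_cancel_r (T : Type) (s1 s2 t : seq T) : s1 ++ t = s2 ++ t -> s1 = s2.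
Proof.
move=> H; have Hs := congr1 size H; rewrite !size_cat in Hs.
case: (cat_split H) => [[m [-> Hm]]|[m [-> Hm]]].
- have := congr1 size Hm; rewrite size_cat => Hz.
  have -> : m = [::] by apply: size0nil; lia.
  by rewrite cats0.
- have := congr1 size Hm; rewrite size_cat => Hz.
  have -> : m = [::] by apply: size0nil; lia.
  by rewrite cats0.
Qed.

Lemma suffix_same (T : Type) (A B v w : seq T) : A ++ v = B ++ w ->
  size v <= size w -> exists s, w = s ++ v.
Proof.
move=> H Hs.
case: (cat_split H) => [[m [_ Hm]]|[m [_ Hm]]].
- have := congr1 size Hm; rewrite size_cat => Hz.
  have E : m = [::] by apply: size0nil; lia.
  by exists [::]; rewrite Hm E.
- by exists m.
Qed.

Lemma pS K : 1 <= K -> p K.+1 = p K ++ nseq K lb ++ p K.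
Proof. by case: K. Qed.

Lemma p_head K : exists r, p K = la :: r.
Proof.
elim: K => [|K [r IH]]; first by exists [::].
case: K IH => [|K] IH; first by exists [::].
by rewrite pS // IH; eexists.
Qed.

Lemma p_last K : exists r, p K = rcons r la.
Proof.
elim: K => [|K [r IH]]; first by exists [::].
case: K IH => [|K] IH; first by exists [::].
by rewrite pS // IH -cats1 !catA; eexists; rewrite cats1.
Qed.

Lemma size_p K : K <= size (p K).
Proof.
elim: K => [|K IH] //.
case: K IH => [|K] IH //.
rewrite pS // !size_cat size_nseq.
have [r ->] := p_head K.+1. rewrite /=. lia.
Qed.

Lemma p_prefix K K' : 1 <= K -> K <= K' -> exists r, p K' = p K ++ r.
Proof.
move=> HK; elim: K' => [|K' IH]; first by case: K HK.
rewrite leq_eqVlt => /orP [/eqP <-|]; first by exists [::]; rewrite cats0.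
rewrite ltnS => HKK; have [r Hr] := IH HKK.
rewrite pS; last by apply: leq_trans HK HKK.
by rewrite Hr -!catA; eexists.
Qed.

Lemma sigma_cat s t : sigma (s ++ t) = sigma s ++ sigma t.
Proof. by rewrite /sigma map_cat flatten_cat. Qed.

Lemma sigma_nseq n : sigma (nseq n lb) = nseq n lb.
Proof. elim: n => [|n IH] //. by rewrite /= -[lb :: _]/([:: lb] ++ _) sigma_cat IH. Qed.

Lemma sigma_p K : 1 <= K -> sigma (p K) = p K.+1 ++ [:: lb].
Proof.
elim: K => [|K IH] // _.
case: K IH => [|K] IH; first by [].
rewrite pS // !sigma_cat sigma_nseq IH // (pS (K := K.+2)) // -!catA.
by [].
Qed.

Lemma iter_sigma n : iter n sigma [:: la] = p n.+1 ++ nseq n lb.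
Proof.
elim: n => [|n IH] //.
by rewrite iterS IH sigma_cat sigma_p // sigma_nseq -catA.
Qed.

Lemma z_p K i : 1 <= K -> i < size (p K) -> z i = nth la (p K) i.
Proof.
move=> HK Hi.
rewrite /z iter_sigma nth_cat.
have Hs := size_p i.+2.
rewrite (_ : i < size (p i.+2)); last by lia.
have [r1 H1] := p_prefix (K := K) (K' := maxn K i.+2) HK (leq_maxl _ _).
have [r2 H2] := p_prefix (K := i.+2) (K' := maxn K i.+2) isT (leq_maxr _ _).
have : nth la (p (maxn K i.+2)) i = nth la (p (maxn K i.+2)) i by [].
rewrite {1}H1 H2 !nth_cat Hi.
by rewrite (_ : i < size (p i.+2)); last by lia.
Qed.

Lemma inL_factor K x w y : 1 <= K -> p K = x ++ w ++ y -> inL w.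
Proof.
move=> HK H; exists (size x).
apply: (@eq_from_nth _ la); first by rewrite size_mkseq.
move=> j Hj; rewrite nth_mkseq // (z_p (K := K)) //; last first.
  by rewrite H !size_cat; lia.
by rewrite H nth_cat ltnNge leq_addr /= addKn nth_cat Hj.
Qed.

Lemma factor_inL w : inL w -> exists K x y, 1 <= K /\ p K = x ++ w ++ y.
Proof.
case=> i Hw.
set K := (i + size w).+1.
have HK : K <= size (p K) := size_p K.
set d := drop i (p K).
have Hd : size w <= size d by rewrite /d size_drop; lia.
have Ew : w = take (size w) d.
  apply: (@eq_from_nth _ la); first by rewrite size_takel.
  move=> j Hj; rewrite nth_take // /d nth_drop.
  rewrite {1}Hw nth_mkseq // (z_p (K := K)) //; lia.
exists K, (take i (p K)), (drop (size w) d); split => //.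
by rewrite [in X in _ ++ X ++ _]Ew cat_take_drop /d cat_take_drop.
Qed.

Lemma nseq_mem_b n m c r : nseq n lb = m ++ c :: r -> c = lb.
Proof.
move=> H; have : c \in nseq n lb by rewrite H mem_cat mem_head orbT.
by rewrite mem_nseq => /andP [_ /eqP].
Qed.

Lemma tail_b K x m' mm n : p K = x ++ la :: m' -> nseq n lb = m' ++ mm -> m' = [::].
Proof.
case: m' => // d m'' H1 H2.
have [r Hr] := p_last K.
have := congr1 (last la) H1; rewrite Hr last_rcons last_cat /= => E.
have := mem_last d m''; rewrite -E => Hin.
have : la \in nseq n lb by rewrite H2 mem_cat Hin.
by rewrite mem_nseq andbF.
Qed.

Lemma nseq_eq K k r1 r2 : nseq K lb ++ la :: r1 = nseq k lb ++ la :: r2 -> K = k.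
Proof.
elim: K k => [|K IH] [|k] //= [] H.
by rewrite (IH k H).
Qed.

Lemma nseq_le K j r y : nseq K lb ++ la :: r = nseq j lb ++ y -> j <= K.
Proof.
elim: j K => [|j IH] [|K] //= [] H.
by rewrite ltnS (IH K H).
Qed.

Lemma p_suffix k K : 1 <= k -> k < K -> exists s, p K = s ++ la :: nseq k lb ++ p k.
Proof.
move=> Hk; elim: K => [|K IH] //.
rewrite ltnS leq_eqVlt => /orP [/eqP <-|HkK].
- rewrite pS //. have [r Hr] := p_last k.
  by exists r; rewrite {1}Hr -cats1 -catA.
- have [s Hs] := IH HkK.
  rewrite pS; last by lia.
  by exists (p K ++ nseq K lb ++ s); rewrite {2}Hs -!catA.
Qed.

Lemma lalb : la <> lb. Proof. by []. Qed.

Lemma occA K k x y : 1 <= k -> p K = x ++ la :: nseq k.+1 lb ++ y ->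
  exists s, x ++ [:: la] = s ++ la :: nseq k lb ++ p k.
Proof.
move=> Hk; elim: K x y => [|K IH] x y H.
  by have := congr1 size H; rewrite /= size_cat /=; lia.
case: K IH H => [|K] IH H.
  by have := congr1 size H; rewrite /= size_cat /=; lia.
move: H; rewrite pS // => H.
case: (cat_split H) => [[m [Ex Hm]]|[m [Ep Ht]]].
- case: (cat_split Hm) => [[m' [Em Hp]]|[m' [Eb Ht]]].
  + have [s Hs] := IH _ _ Hp.
    exists (p K.+1 ++ nseq K.+1 lb ++ s).
    by rewrite Ex Em -!catA Hs.
  + case: m' Eb Ht => [|c m''] Eb Ht.
    * have [s Hs] := IH [::] y (esym Ht).
      by exists (x ++ s); rewrite -catA -Hs.
    * case: Ht => Ec _. have := nseq_mem_b Eb. by rewrite -Ec.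
- case: m Ep Ht => [|c m'] Ep Ht; first by case: Ht.
  have Ec : c = la by case: Ht.
  subst c.
  have {}Ht : nseq k.+1 lb ++ y = m' ++ (nseq K.+1 lb ++ p K.+1) by case: Ht.
  case: (cat_split Ht) => [[mm [Em Hy]]|[mm [Eb Ht2]]].
  + have [s Hs] := IH x mm ltac:(by rewrite Ep Em).
    by exists s.
  + have E0 := tail_b Ep Eb. subst m'.
    have [r Hr] := p_head K.+1.
    move: Eb Ht2; rewrite cat0s => <-; rewrite Hr => Ht2.
    have Hle := nseq_le Ht2.
    have [s Hs] := p_suffix (K := K.+1) Hk Hle.
    by exists s; rewrite -Hs Ep.
Qed.

Lemma occB K k x y : 1 <= k -> p K = x ++ la :: nseq k lb ++ la :: y ->
  exists s, nseq K lb ++ x ++ [:: la] = s ++ nseq k.+1 lb ++ p k.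
Proof.
move=> Hk; elim: K x y => [|K IH] x y H.
  by have := congr1 size H; rewrite /= size_cat /= size_cat /=; lia.
case: K IH H => [|K] IH H.
  by have := congr1 size H; rewrite /= size_cat /= size_cat /=; lia.
move: H; rewrite pS // => H.
case: (cat_split H) => [[m [Ex Hm]]|[m [Ep Ht]]].
- case: (cat_split Hm) => [[m' [Em Hp]]|[m' [Eb Ht]]].
  + have [s Hs] := IH _ _ Hp.
    exists (nseq K.+2 lb ++ p K.+1 ++ s).
    by rewrite Ex Em -!catA Hs.
  + case: m' Eb Ht => [|c m''] Eb Ht.
    * have [s Hs] := IH [::] y (esym Ht).
      exists (nseq K.+2 lb ++ p K.+1 ++ s).
      move: Eb; rewrite cats0 => Eb.
      by rewrite cat0s in Hs; rewrite Ex -Eb -!catA Hs.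
    * case: Ht => Ec _. have := nseq_mem_b Eb. by rewrite -Ec.
- case: m Ep Ht => [|c m'] Ep Ht; first by case: Ht.
  have Ec : c = la by case: Ht.
  subst c.
  have {}Ht : nseq k lb ++ la :: y = m' ++ (nseq K.+1 lb ++ p K.+1) by case: Ht.
  case: (cat_split Ht) => [[mm [Em Hy]]|[mm [Eb Ht2]]].
  + case: mm Em Hy => [|d mm'] Em Hy; first by case: Hy.
    case: Hy => Ed _. subst d.
    have [s Hs] := IH x mm' ltac:(by rewrite Ep Em).
    by exists (lb :: s); exact: (congr1 (cons lb) Hs).
  + have E0 := tail_b Ep Eb. subst m'.
    have [r Hr] := p_head K.+1.
    move: Eb Ht2; rewrite cat0s => <-; rewrite Hr => Ht2.
    have EK := nseq_eq Ht2. subst k.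
    by exists [::]; rewrite Ep.
Qed.

Lemma nseq_rcons n : rcons (nseq n lb) lb = nseq n.+1 lb.
Proof. by elim: n => [|n IH] //=; rewrite IH. Qed.

Theorem mainTheorem8 (k : nat) (u : seq letter) : 1 <= k ->
  right_special (u ++ la :: nseq k lb) <->
  suffix (u ++ la :: nseq k lb) (nseq k lb ++ p k ++ nseq k lb).
Proof.
move=> Hk; split.
- case=> /factor_inL [K1 [x1 [y1 [_ H1]]]] /factor_inL [K2 [x2 [y2 [_ H2]]]].
  move: H1; rewrite rcons_cat /= -cats1 -!catA /= -catA => H1.
  move: H2; rewrite rcons_cat /= nseq_rcons -!catA /= => H2.
  have [s1 Hs1] := occB (K := K1) (x := x1 ++ u) (y := y1) Hk ltac:(by rewrite H1 -catA).
  have [s2 Hs2] := occA (K := K2) (x := x2 ++ u) (y := y2) Hk ltac:(by rewrite H2 -catA).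
  set T := nseq k lb ++ p k.
  suff [s Hs] : exists s, T = s ++ u ++ [:: la].
    apply/suffixP; exists s.
    by rewrite catA -/T Hs -!catA.
  move: Hs1 Hs2; rewrite -!catA => Hs1 Hs2.
  have Hs1' : (nseq K1 lb ++ x1) ++ (u ++ [:: la]) = s1 ++ (lb :: T) by rewrite -catA; exact: Hs1.
  have Hs2' : x2 ++ (u ++ [:: la]) = s2 ++ (la :: T) by exact: Hs2.
  case: (leqP (size (u ++ [:: la])) (size T)) => Hsz.
  + have [s Hs] := suffix_same Hs1' ltac:(by rewrite /=; lia).
    case: s Hs => [|c s] Hs.
      by have := congr1 size Hs; rewrite /=; lia.
    by case: Hs => _ ->; exists s.
  + have [s Hs] := suffix_same (esym Hs1') ltac:(by rewrite /=; lia).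
    have [s' Hs'] := suffix_same (esym Hs2') ltac:(by rewrite /=; lia).
    move: Hs'; rewrite Hs => E.
    have := congr1 size E; rewrite !size_cat /= => Ez.
    case: (cat_split E) => [[m [Em Hm]]|[m [Em Hm]]].
    * have Em0 : m = [::] by case: m Em Hm Ez => //= ? ? ->; rewrite size_cat /=; lia.
      by move: Hm; rewrite Em0.
    * have Em0 : m = [::] by case: m Em Hm Ez => //= ? ? ->; rewrite size_cat /=; lia.
      by move: Hm; rewrite Em0.
- case/suffixP => s Hs.
  have Hs' : nseq k lb ++ p k = s ++ u ++ [:: la].
    apply: (@cat_cancel_r _ _ _ (nseq k lb)).
    by rewrite -!catA Hs.
  have [r Hr] := p_head k.
  have Ep2 : p k.+2 = p k ++ nseq k lb ++ p k ++ nseq k.+1 lb ++ p k ++ nseq k lb ++ p k.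
    by rewrite pS // pS // -!catA.
  split.
  + apply: (@inL_factor k.+2 (p k ++ nseq k lb ++ p k ++ [:: lb] ++ s) _ r) => //.
    have Ep3 : p k.+2 = p k ++ nseq k lb ++ p k ++ nseq k.+1 lb ++ p k ++ nseq k lb ++ la :: r.
      by rewrite Ep2 -Hr.
    have E : nseq k lb ++ p k ++ nseq k lb ++ [:: la] = s ++ rcons (u ++ la :: nseq k lb) la.
      by rewrite catA Hs' rcons_cat -cats1 -!catA.
    rewrite Ep3 -!catA [s ++ _]catA -E -!catA.
    by [].
  + apply: (@inL_factor k.+2 (p k ++ s) _ (p k ++ nseq k lb ++ p k)) => //.
    rewrite Ep2.
    have : nseq k lb ++ p k ++ nseq k.+1 lb = s ++ rcons (u ++ la :: nseq k lb) lb.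
      by rewrite catA Hs' rcons_cat /= nseq_rcons -!catA.
    move=> E.
    have -> : p k ++ nseq k lb ++ p k ++ nseq k.+1 lb ++ p k ++ nseq k lb ++ p k
       = p k ++ (nseq k lb ++ p k ++ nseq k.+1 lb) ++ p k ++ nseq k lb ++ p k by rewrite -!catA.
    by rewrite E -!catA.
Qed.
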